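(* Let $\mathcal P=\langle F,R\rangle$ be a program and $H$ a hypothesis. Define $IF(F,H)=\{A\mid F(A)\neq\mathcal U,\ H(A)\neq\mathcal U,\ F(A)\neq H(A)\}$, $PF_0=\emptyset$ and, for $i\ge1$, $$PF_i=\{A\mid A\leftarrow B\in R \text{ and } B\not\equiv H(A)\text{ w.r.t. } F\oplus H_{/(\mathcal{HB}_{\mathcal P}\setminus IF(F,H))\setminus PF_{i-1}}\}.$$ Then the sequence $(PF_i)_{i\ge0}$ is increasing with respect to set inclusion and reaches its limit $PF$ in a finite number of steps.
   Context: Let $\langle \mathcal{B},\le_t,\le_k\rangle$ be a complete, infinitely distributive bilattice with negation satisfying the infinitary interlacing conditions; $\wedge,\vee$ are meet/join for $\le_t$, $\otimes,\oplus$ meet/join for $\le_k$, $\mathcal U$ is the bottom of $\le_k$. A closed formula is built from ground literals and elements of $\mathcal B$ using $\wedge,\vee,\otimes,\oplus,\exists,\forall$ (quantifiers over closed terms). A program $\mathcal P=\langle F,R\rangle$ consists of a function $F$ from the Herbrand base $\mathcal{HB}_{\mathcal P}$ to $\mathcal B$ and a finite set $R$ of ground clauses $A\leftarrow B$, each ground atom being the head of at most one clause. A hypothesis (interpretation) is a function $\mathcal{HB}_{\mathcal P}\to\mathcal B$, extended to closed formulas homomorphically ($I(\neg A)=\neg I(A)$, $I(X\wedge Y)=I(X)\wedge I(Y)$ etc., $\exists$ as $\bigvee$, $\forall$ as $\bigwedge$ over closed instances). Operations on interpretations are pointwise, e.g. $(I\oplus J)(A)=I(A)\oplus J(A)$.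 $I\le J$ means $I(A)\neq\mathcal U\Rightarrow I(A)=J(A)$ for all $A$. $I_{/S}$ is $I$ on $S$ and $\mathcal U$ elsewhere. $B\equiv_I\alpha$ means $J(B)=\alpha$ for all $J$ with $I\le J$; $B\not\equiv_I\alpha$ is its negation. *)

(* Defs.v *)
From Stdlib Require Import List Arith ClassicalEpsilon.
Import ListNotations.
Set Implicit Arguments.

Definition is_lub {T : Type} (le : T -> T -> Prop) (S : T -> Prop) (x : T) :=
  (forall s, S s -> le s x) /\ (forall y, (forall s, S s -> le s y) -> le x y).
Definition is_glb {T : Type} (le : T -> T -> Prop) (S : T -> Prop) (x : T) :=
  (forall s, S s -> le x s) /\ (forall y, (forall s, S s -> le y s) -> le y x).

Definition partial_order {T : Type} (le : T -> T -> Prop) :=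
  (forall x, le x x) /\ (forall x y z, le x y -> le y z -> le x z) /\
  (forall x y, le x y -> le y x -> x = y).

Definition inf_distr {T : Type} (op : T -> T -> T) (big : (T -> Prop) -> T) :=
  forall x (S : T -> Prop), (exists s, S s) ->
    op x (big S) = big (fun z => exists s, S s /\ z = op x s).

Definition fam {T I : Type} (a : I -> T) : T -> Prop := fun z => exists i, z = a i.

Definition big_mono {T : Type} (le : T -> T -> Prop) (big : (T -> Prop) -> T) :=
  forall (I : Type) (a b : I -> T), (forall i, le (a i) (b i)) -> le (big (fam a)) (big (fam b)).
Definition bin_mono {T : Type} (le : T -> T -> Prop) (op : T -> T -> T) :=
  forall x y x' y', le x x' -> le y y' -> le (op x y) (op x' y').

Record bilattice := Bilattice {
  car :> Type;
  le_t : car -> car -> Prop;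
  le_k : car -> car -> Prop;
  meet_t : car -> car -> car;
  join_t : car -> car -> car;
  meet_k : car -> car -> car;
  join_k : car -> car -> car;
  sup_t : (car -> Prop) -> car;
  inf_t : (car -> Prop) -> car;
  sup_k : (car -> Prop) -> car;
  inf_k : (car -> Prop) -> car;
  neg : car -> car;
  le_t_po : partial_order le_t;
  le_k_po : partial_order le_k;
  sup_tP : forall S, is_lub le_t S (sup_t S);
  inf_tP : forall S, is_glb le_t S (inf_t S);
  sup_kP : forall S, is_lub le_k S (sup_k S);
  inf_kP : forall S, is_glb le_k S (inf_k S);
  meet_tP : forall x y, is_glb le_t (fun z => z = x \/ z = y) (meet_t x y);
  join_tP : forall x y, is_lub le_t (fun z => z = x \/ z = y) (join_t x y);
  meet_kP : forall x y, is_glb le_k (fun z => z = x \/ z = y) (meet_k x y);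
  join_kP : forall x y, is_lub le_k (fun z => z = x \/ z = y) (join_k x y);
  neg_t : forall x y, le_t x y -> le_t (neg y) (neg x);
  neg_k : forall x y, le_k x y -> le_k (neg x) (neg y);
  negK : forall x, neg (neg x) = x;
  d_mt_st : inf_distr meet_t sup_t; d_mt_sk : inf_distr meet_t sup_k;
  d_mt_ik : inf_distr meet_t inf_k;
  d_jt_it : inf_distr join_t inf_t; d_jt_sk : inf_distr join_t sup_k;
  d_jt_ik : inf_distr join_t inf_k;
  d_mk_sk : inf_distr meet_k sup_k; d_mk_st : inf_distr meet_k sup_t;
  d_mk_it : inf_distr meet_k inf_t;
  d_jk_ik : inf_distr join_k inf_k; d_jk_st : inf_distr join_k sup_t;
  d_jk_it : inf_distr join_k inf_t;
  il_mt : bin_mono le_k meet_t; il_jt : bin_mono le_k join_t;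
  il_mk : bin_mono le_t meet_k; il_jk : bin_mono le_t join_k;
  il_it : big_mono le_k inf_t; il_st : big_mono le_k sup_t;
  il_ik : big_mono le_t inf_k; il_sk : big_mono le_t sup_k
}.

Definition Ub (B : bilattice) : B := sup_k B (fun _ => False).

(* Atom: the Herbrand base (ground atoms); Term: closed terms.
   Quantified formulas are given by their family of closed instances. *)
Inductive formula (B : Type) (Atom Term : Type) : Type :=
  | FPos : Atom -> formula B Atom Term
  | FNeg : Atom -> formula B Atom Term
  | FConst : B -> formula B Atom Term
  | FAnd : formula B Atom Term -> formula B Atom Term -> formula B Atom Term
  | FOr : formula B Atom Term -> formula B Atom Term -> formula B Atom Term
  | FOtimes : formula B Atom Term -> formula B Atom Term -> formula B Atom Term
  | FOplus : formula B Atom Term -> formula B Atom Term -> formula B Atom Term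
  | FEx : (Term -> formula B Atom Term) -> formula B Atom Term
  | FAll : (Term -> formula B Atom Term) -> formula B Atom Term.

Definition interp (B : bilattice) (Atom : Type) := Atom -> car B.

Fixpoint eval (B : bilattice) (Atom Term : Type) (I : interp B Atom)
  (f : formula (car B) Atom Term) : car B :=
  match f with
  | FPos _ _ A => I A
  | FNeg _ _ A => neg B (I A)
  | FConst _ _ b => b
  | FAnd X Y => meet_t B (eval I X) (eval I Y)
  | FOr X Y => join_t B (eval I X) (eval I Y)
  | FOtimes X Y => meet_k B (eval I X) (eval I Y)
  | FOplus X Y => join_k B (eval I X) (eval I Y)
  | FEx g => sup_t B (fun b => exists t, b = eval I (g t))
  | FAll g => inf_t B (fun b => exists t, b = eval I (g t))
  end.

Record program (B : bilattice) (Atom Term : Type) := Program {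
  facts : interp B Atom;
  rules : list (Atom * formula (car B) Atom Term);
  rules_heads : NoDup (map fst rules)
}.

Definition ioplus (B : bilattice) (Atom : Type) (I J : interp B Atom) : interp B Atom :=
  fun A => join_k B (I A) (J A).

Definition restrict (B : bilattice) (Atom : Type) (I : interp B Atom) (S : Atom -> Prop)
  : interp B Atom :=
  fun A => if excluded_middle_informative (S A) then I A else Ub B.

Definition ext_le (B : bilattice) (Atom : Type) (I J : interp B Atom) : Prop :=
  forall A, I A <> Ub B -> I A = J A.

Definition equivI (B : bilattice) (Atom Term : Type) (I : interp B Atom)
  (f : formula (car B) Atom Term) (alpha : car B) : Prop :=
  forall J, ext_le I J -> eval J f = alpha.

Definition IFset (B : bilattice) (Atom : Type) (F H : interp B Atom) : Atom -> Prop :=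
  fun A => F A <> Ub B /\ H A <> Ub B /\ F A <> H A.

Fixpoint PF (B : bilattice) (Atom Term : Type) (P : program B Atom Term)
  (H : interp B Atom) (i : nat) : Atom -> Prop :=
  match i with
  | 0 => fun _ => False
  | S j => fun A => exists Bd, In (A, Bd) (rules P) /\
      ~ equivI (ioplus (facts P)
                  (restrict H (fun A' => ~ IFset (facts P) H A' /\ ~ PF P H j A')))
               Bd (H A)
  end.

(* Main.v *)
Require Import Defs.
From Stdlib Require Import List Arith Lia Classical ClassicalEpsilon.

Section Aux.
Variable B : bilattice.

Lemma Ub_bot (x : car B) : le_k B (Ub B) x.
Proof. unfold Ub. destruct (sup_kP B (fun _ => False)) as [_ H]. apply H. tauto. Qed.

Lemma jk_lub x y z : le_k B x z -> le_k B y z -> le_k B (join_k B x y) z.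
Proof. intros. destruct (join_kP B x y) as [_ H1]. apply H1. intros s [->| ->]; auto. Qed.
Lemma jk_ub1 x y : le_k B x (join_k B x y).
Proof. destruct (join_kP B x y) as [H1 _]. apply H1; auto. Qed.
Lemma jk_ub2 x y : le_k B y (join_k B x y).
Proof. destruct (join_kP B x y) as [H1 _]. apply H1; auto. Qed.
Lemma kantisym x y : le_k B x y -> le_k B y x -> x = y.
Proof. destruct (le_k_po B) as [_ [_ H]]. apply H. Qed.
Lemma krefl x : le_k B x x.
Proof. destruct (le_k_po B) as [H _]. apply H. Qed.

Lemma jkU x : join_k B x (Ub B) = x.
Proof. apply kantisym. apply jk_lub; [apply krefl|apply Ub_bot]. apply jk_ub1. Qed.
Lemma Ujk x : join_k B (Ub B) x = x.
Proof. apply kantisym. apply jk_lub; [apply Ub_bot|apply krefl]. apply jk_ub2. Qed.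
Lemma jkxx x : join_k B x x = x.
Proof. apply kantisym. apply jk_lub; apply krefl. apply jk_ub1. Qed.
End Aux.

Section Main.
Variables (B : bilattice) (Atom Term : Type) (P : program B Atom Term) (H : interp B Atom).

Definition K (X : Atom -> Prop) : interp B Atom :=
  ioplus (facts P) (restrict H (fun A' => ~ IFset (facts P) H A' /\ ~ X A')).

Definition step (X : Atom -> Prop) : Atom -> Prop := fun A => exists Bd, In (A, Bd) (rules P) /\
      ~ equivI (K X) Bd (H A).

Lemma PF_S j : forall A, PF P H (S j) A <-> step (PF P H j) A.
Proof. intro A. simpl. unfold step, K. tauto. Qed.

Lemma ext_trans (I J L : interp B Atom) : ext_le I J -> ext_le J L -> ext_le I L.
Proof. unfold ext_le. intros h1 h2 A hA. rewrite h1 by auto. apply h2. rewrite <- h1; auto. Qed.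

Lemma K_le (X Y : Atom -> Prop) : (forall A, X A -> Y A) -> ext_le (K Y) (K X).
Proof.
  intros hXY A hA. unfold K, ioplus, restrict in *.
  destruct (excluded_middle_informative (~ IFset (facts P) H A /\ ~ Y A)) as [h|h];
  destruct (excluded_middle_informative (~ IFset (facts P) H A /\ ~ X A)) as [h'|h']; auto.
  - exfalso. apply h'. split; [tauto|]. intro hx. destruct h as [_ h]. exact (h (hXY A hx)).
  - rewrite jkU in hA |- *.
    assert (hn : ~ IFset (facts P) H A) by tauto.
    unfold IFset in hn.
    destruct (classic (facts P A = Ub B)) as [e|e]; [congruence|].
    destruct (classic (H A = Ub B)) as [e2|e2]. rewrite e2, jkU; auto.
    assert (facts P A = H A) by (apply NNPP; tauto). rewrite <- H0, jkxx; auto.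
Qed.

Lemma step_mono X Y : (forall A, X A -> Y A) -> forall A, step X A -> step Y A.
Proof.
  intros hXY A [Bd [hin hne]]. exists Bd. split; auto. intro he. apply hne.
  intros J hJ. apply he. eapply ext_trans; [apply K_le; exact hXY| exact hJ].
Qed.

Lemma PF_mono : forall i A, PF P H i A -> PF P H (S i) A.
Proof.
  induction i; intros A h. destruct h.
  apply PF_S. apply PF_S in h. eapply step_mono; [|exact h]. exact IHi.
Qed.

Definition L := map fst (rules P).
Definition bp (X : Atom -> Prop) a := if excluded_middle_informative (X a) then true else false.
Definition f i := length (filter (bp (PF P H i)) L).

Lemma filt_le (p q : Atom -> bool) l : (forall a, p a = true -> q a = true) ->
  length (filter p l) <= length (filter q l).
Proof.
  intro h; induction l; simpl; auto.
  destruct (p a) eqn:e. rewrite (h a e). simpl; lia. destruct (q a); simpl; lia.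
Qed.

Lemma filt_eq (p q : Atom -> bool) l : (forall a, p a = true -> q a = true) ->
  length (filter p l) = length (filter q l) -> forall a, In a l -> q a = true -> p a = true.
Proof.
  intro h; induction l; simpl; intros hl b hb hq. destruct hb.
  destruct (p a) eqn:e; [rewrite (h a e) in hl|]; simpl in hl.
  - destruct hb as [->|hb]; [auto| apply IHl; auto; lia].
  - destruct (q a) eqn:e2; simpl in hl.
    + pose proof (filt_le p q l h). lia.
    + destruct hb as [->|hb]; [congruence|]. apply IHl; auto.
Qed.

Lemma f_mono i : f i <= f (S i).
Proof. apply filt_le. intros a. unfold bp.
  destruct (excluded_middle_informative _); destruct (excluded_middle_informative _); auto.
  intros _. exfalso. apply n. apply PF_mono; auto. Qed.

Lemma f_bound i : f i <= length L.
Proof. unfold f. induction L; simpl; auto. destruct (bp _ a); simpl; lia. Qed.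

Lemma f_grow : (forall i, f i < f (S i)) -> forall k, k <= f k.
Proof. intros h k; induction k; [lia|]. specialize (h k). lia. Qed.

Lemma PF_in i A : PF P H (S i) A -> In A L.
Proof. intros [Bd [hin _]]. unfold L. change A with (fst (A, Bd)). apply in_map; auto. Qed.

End Main.

Theorem mainTheorem4 (B : bilattice) (Atom Term : Type)
  (P : program B Atom Term) (H : interp B Atom) :
  (forall i A, PF P H i A -> PF P H (S i) A) /\
  (exists n, forall m, n <= m -> forall A, PF P H m A <-> PF P H n A).
Proof.
  split. apply PF_mono.
  assert (hex : exists n, @f B Atom Term P H n = @f B Atom Term P H (S n)).
  { apply NNPP. intro hn. 
    assert (forall i, @f B Atom Term P H i < @f B Atom Term P H (S i)).
    { intro i. pose proof (@f_mono B Atom Term P H i). destruct (Nat.eq_dec (@f B Atom Term P H i) (@f B Atom Term P H (S i))).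
      exfalso; apply hn; eauto. lia. }
    pose proof (@f_grow B Atom Term P H H0 (S (length (@L B Atom Term P)))). pose proof (@f_bound B Atom Term P H (S (length (@L B Atom Term P)))). lia. }
  destruct hex as [n hn].
  assert (hstab : forall A, PF P H (S n) A -> PF P H n A).
  { intros A hA.
    assert (@bp Atom (PF P H n) A = true).
    { eapply filt_eq with (q := @bp Atom (PF P H (S n))); [| exact hn | eapply PF_in; eauto |].
      - intros a. unfold bp.
        destruct (excluded_middle_informative _) as [x1|x1]; destruct (excluded_middle_informative _) as [x2|x2]; auto.
        intros _. exfalso. apply x2. apply PF_mono; auto.
      - unfold bp. destruct (excluded_middle_informative _); auto. }
    unfold bp in H0. destruct (excluded_middle_informative _); auto; discriminate. }
  exists n. intros m hm. induction hm; intro A. tauto.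
  rewrite PF_S. split; intro h.
  - apply hstab. apply PF_S. eapply step_mono; [|exact h]. intro. apply IHhm.
  - eapply step_mono; [|apply PF_S, PF_mono; exact h]. intro. apply IHhm.
Qed.
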